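(* Let $Q:\mathcal{P}(S)^{\mathrm{op}}\to\Lambda$ be an $S$-cube in the cyclic category. The following are equivalent: (1) $Q$ is strongly Cartesian; (2) there is a strongly Cartesian $S$-cube in $\Delta$ whose image under the canonical functor $\Delta\to\Lambda$ is $Q$; (3) every $S$-cube $Q'$ in $\Delta$ whose image under $\Delta\to\Lambda$ is $Q$ is strongly Cartesian.
   Context: $\Delta$: simplex category; $\Lambda$: Connes' cyclic category; the canonical functor $\Delta\to\Lambda$, $[n]\mapsto\langle n\rangle=(\mathbb{Z}/(n+1),+1)$, identifies $\Delta$ with the slice category $\Lambda_{/\langle0\rangle}$ and is the forgetful functor $\Lambda_{/\langle0\rangle}\to\Lambda$. $\mathcal{P}(S)$ is the subset poset of a finite set $S$. An $S$-cube $Q:\mathcal{P}(S)^{\mathrm{op}}\to\mathcal{D}$ is strongly Cartesian if each square $Q(T\cup\{s,s'\})\to Q(T\cup\{s\}),Q(T\cup\{s'\})\to Q(T)$ ($T\subseteq S$, $s\neq s'\in S\setminus T$) is a pullback in $\mathcal{D}$. *)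

(* Defs.v *)
From mathcomp Require Import all_boot.
From Stdlib Require Import ZArith.

Set Implicit Arguments.
Unset Strict Implicit.
Unset Printing Implicit Defensive.

(* A minimal notion of (concrete) category: morphisms are raw data     *)
(* together with a validity predicate [ishom] and an equality [heq].   *)
Record Cat := Cat_ {
  ob : Type;
  hom : ob -> ob -> Type;
  ishom : forall a b : ob, hom a b -> Prop;
  heq : forall a b : ob, hom a b -> hom a b -> Prop;
  cid : forall a : ob, hom a a;
  ccomp : forall a b c : ob, hom b c -> hom a b -> hom a c }.

Arguments ishom {c a b} _ : rename.
Arguments heq {c a b} _ _ : rename.
Arguments cid {c} a : rename.
Arguments ccomp {c a b c0} _ _ : rename.

(* Connes' cyclic category Lambda.  The object <n> = (Z/(n+1), +1) is  *)
(* represented by n : nat.  A morphism <m> -> <n> is represented by a  *)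
(* non-decreasing f : Z -> Z with f (i + (m+1)) = f i + (n+1); two     *)
(* such represent the same morphism iff they differ by a multiple of   *)
(* n+1 (Lambda = Lambda_infty / BZ).                                   *)
Definition lam_ishom (m n : nat) (f : Z -> Z) : Prop :=
  (forall i j : Z, (i <= j)%Z -> (f i <= f j)%Z) /\
  (forall i : Z, f (i + Z.of_nat (S m))%Z = (f i + Z.of_nat (S n))%Z).

Definition lam_heq (m n : nat) (f g : Z -> Z) : Prop :=
  exists k : Z, forall i : Z, f i = (g i + k * Z.of_nat (S n))%Z.

Definition Lam : Cat :=
  @Cat_ nat (fun _ _ => Z -> Z) lam_ishom lam_heq
        (fun _ => fun i => i) (fun _ _ _ g f => fun i => g (f i)).

(* The simplex category Delta: object [n] = {0,...,n} is n : nat; a    *)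
(* morphism [m] -> [n] is a map Z -> Z whose restriction to [0,m] is   *)
(* non-decreasing with values in [0,n]; equality = equality on [0,m].  *)
Definition del_ishom (m n : nat) (f : Z -> Z) : Prop :=
  (forall i j : Z, (0 <= i)%Z -> (i <= j)%Z -> (j <= Z.of_nat m)%Z ->
     (f i <= f j)%Z) /\
  (forall i : Z, (0 <= i <= Z.of_nat m)%Z -> (0 <= f i <= Z.of_nat n)%Z).

Definition del_heq (m n : nat) (f g : Z -> Z) : Prop :=
  forall i : Z, (0 <= i <= Z.of_nat m)%Z -> f i = g i.

Definition Del : Cat :=
  @Cat_ nat (fun _ _ => Z -> Z) del_ishom del_heq
        (fun _ => fun i => i) (fun _ _ _ g f => fun i => g (f i)).

(* The canonical functor Delta -> Lambda: [n] |-> <n>, and a monotone  *)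
(* f : [m] -> [n] is extended (m+1 |-> n+1)-equivariantly to Z.        *)
Definition del_to_lam (m n : nat) (f : Z -> Z) : Z -> Z :=
  fun i => (f (i mod Z.of_nat (S m)) + (i / Z.of_nat (S m)) * Z.of_nat (S n))%Z.

(* S-cubes P(S)^op -> C: an object for each T, and a morphism          *)
(* Q(T') -> Q(T) for each T \subset T' (values for other pairs are      *)
(* irrelevant), subject to the functor laws.                           *)
Record cube (C : Cat) (S : finType) := Cube {
  cobj : {set S} -> ob C;
  cmap : forall T T' : {set S}, hom (cobj T') (cobj T) }.

Arguments cobj {C S} _ _.
Arguments cmap {C S} _ _ _.

Definition is_cube (C : Cat) (S : finType) (Q : cube C S) : Prop :=
  (forall T T' : {set S}, T \subset T' -> ishom (cmap Q T T')) /\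
  (forall T : {set S}, heq (cmap Q T T) (cid (cobj Q T))) /\
  (forall T1 T2 T3 : {set S}, T1 \subset T2 -> T2 \subset T3 ->
     heq (cmap Q T1 T3) (ccomp (cmap Q T1 T2) (cmap Q T2 T3))).

Definition is_pullback (C : Cat) (P A B D : ob C)
    (p1 : hom P A) (p2 : hom P B) (f : hom A D) (g : hom B D) : Prop :=
  ishom p1 /\ ishom p2 /\ ishom f /\ ishom g /\
  heq (ccomp f p1) (ccomp g p2) /\
  forall (X : ob C) (x1 : hom X A) (x2 : hom X B),
    ishom x1 -> ishom x2 -> heq (ccomp f x1) (ccomp g x2) ->
    (exists u : hom X P, ishom u /\ heq (ccomp p1 u) x1 /\ heq (ccomp p2 u) x2) /\
    (forall u v : hom X P, ishom u -> ishom v ->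
       heq (ccomp p1 u) x1 -> heq (ccomp p2 u) x2 ->
       heq (ccomp p1 v) x1 -> heq (ccomp p2 v) x2 -> heq u v).

Definition strongly_cartesian (C : Cat) (S : finType) (Q : cube C S) : Prop :=
  forall (T : {set S}) (s s' : S), s != s' -> s \notin T -> s' \notin T ->
    is_pullback (cmap Q (s |: T) (s |: (s' |: T)))
                (cmap Q (s' |: T) (s |: (s' |: T)))
                (cmap Q T (s |: T))
                (cmap Q T (s' |: T)).

Definition lam_image (S : finType) (Q : cube Del S) : cube Lam S :=
  @Cube Lam S (cobj Q)
        (fun T T' => del_to_lam (cobj Q T') (cobj Q T) (cmap Q T T')).

Definition nat_iso (C : Cat) (S : finType) (Q1 Q2 : cube C S) : Prop :=
  exists (a : forall T, hom (cobj Q1 T) (cobj Q2 T))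
         (b : forall T, hom (cobj Q2 T) (cobj Q1 T)),
    forall T : {set S},
      ishom (a T) /\ ishom (b T) /\
      heq (ccomp (a T) (b T)) (cid (cobj Q2 T)) /\
      heq (ccomp (b T) (a T)) (cid (cobj Q1 T)) /\
      (forall T' : {set S}, T \subset T' ->
         heq (ccomp (a T) (cmap Q1 T T')) (ccomp (cmap Q2 T T') (a T'))).

(* Main.v *)
Require Import Defs.
From mathcomp Require Import all_boot.
From Stdlib Require Import ZArith Lia ClassicalEpsilon.

Set Implicit Arguments.
Unset Strict Implicit.
Local Open Scope Z_scope.

Lemma eqv_mul (M N : Z) (f : Z -> Z) :
  (forall i, f (i + M) = f i + N) -> forall z i, f (i + z * M) = f i + z * N.
Proof.
move=> H.
have Hp : forall k : nat, forall i, f (i + Z.of_nat k * M) = f i + Z.of_nat k * N.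
  elim=> [|k IH] i; first by rewrite /= !Z.add_0_r.
  rewrite Nat2Z.inj_succ.
  have -> : i + Z.succ (Z.of_nat k) * M = (i + Z.of_nat k * M) + M by lia.
  rewrite H IH; lia.
move=> z i.
case: (Z_le_gt_dec 0 z) => hz.
  by have := Hp (Z.to_nat z) i; rewrite Z2Nat.id.
have := Hp (Z.to_nat (- z)) (i + z * M); rewrite Z2Nat.id; last lia.
have -> : i + z * M + - z * M = i by lia.
move=> ->; lia.
Qed.

Lemma divq (a q N : Z) : 0 <= a < N -> (a + q * N) / N = q.
Proof. move=> h; rewrite Z.div_add; last lia. rewrite Z.div_small //; lia. Qed.
Lemma modq (a q N : Z) : 0 <= a < N -> (a + q * N) mod N = a.
Proof. move=> h; rewrite Z.mod_add; last lia. rewrite Z.mod_small //. Qed.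

Lemma rot_gen (M : Z) (phi : Z -> Z) : 0 < M ->
  (forall i j, i <= j -> phi i <= phi j) ->
  (forall i, phi (i + M) = phi i + 1) ->
  exists r K, forall i, phi (i + r) = i / M + K.
Proof.
move=> hM mono per.
have [r [h1 h2]] : exists r, phi (r - 1) <= phi 0 < phi r.
  have gen : forall t : nat, phi 0 < phi (Z.of_nat t) ->
      exists r, phi (r - 1) <= phi 0 < phi r.
    elim=> [|t IH] h; first by move: h => /=; lia.
    case: (Z_lt_le_dec (phi 0) (phi (Z.of_nat t))) => h'; first exact: IH.
    exists (Z.of_nat t.+1).
    have -> : Z.of_nat t.+1 - 1 = Z.of_nat t by lia.
    lia.
  apply: (gen (Z.to_nat M)); rewrite Z2Nat.id; last lia.
  have := per 0; rewrite Z.add_0_l; lia.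
exists r, (phi 0 + 1) => i.
have key : forall j, 0 <= j < M -> phi (j + r) = phi 0 + 1.
  move=> j hj.
  have a : phi r <= phi (j + r) by apply: mono; lia.
  have b : phi (j + r) <= phi (r - 1 + M) by apply: mono; lia.
  rewrite per in b; lia.
have E : i + r = (i mod M + r) + (i / M) * M.
  have := Z.div_mod i M ltac:(lia); lia.
rewrite E (eqv_mul per) key; first lia.
apply: Z.mod_pos_bound; lia.
Qed.

Notation NN n := (Z.of_nat (S n)).

Lemma NNpos (n : nat) : 0 < NN n. Proof. lia. Qed.

                
Lemma lq_refl m n f : lam_heq m n f f.
Proof. by exists 0 => i; lia. Qed.
Lemma lq_sym m n f g : lam_heq m n f g -> lam_heq m n g f.
Proof. case=> k H; exists (- k) => i; rewrite H; lia. Qed.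
Lemma lq_trans m n f g h : lam_heq m n f g -> lam_heq m n g h -> lam_heq m n f h.
Proof. case=> k H [l H']; exists (k + l) => i; rewrite H H'; lia. Qed.
Lemma lq_ext m n (f g : Z -> Z) : (forall i, f i = g i) -> lam_heq m n f g.
Proof. move=> H; exists 0 => i; rewrite H; lia. Qed.
Lemma lq_congR n p (g g' h : Z -> Z) : lam_heq p n g g' ->
  lam_heq p n (fun i => g (h i)) (fun i => g' (h i)).
Proof. case=> k H; exists k => i; exact: H. Qed.
Lemma lq_congL m n p (g f f' : Z -> Z) : lam_ishom n p g -> lam_heq m n f f' ->
  lam_heq m p (fun i => g (f i)) (fun i => g (f' i)).
Proof.
case=> _ hg [k H]; exists k => i; rewrite H; exact: (eqv_mul hg).
Qed.
Lemma lh_comp m n p (g f : Z -> Z) : lam_ishom n p g -> lam_ishom m n f ->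
  lam_ishom m p (fun i => g (f i)).
Proof.
case=> mg eg [mf ef]; split.
  by move=> i j h; apply: mg; apply: mf.
by move=> i; rewrite ef eg.
Qed.
Lemma lh_shift m c : lam_ishom m m (fun i => i + c).
Proof. split=> [i j h|i]; lia. Qed.

Definition liso (X Y : nat) (a b : Z -> Z) :=
  lam_ishom X Y a /\ lam_ishom Y X b /\
  lam_heq Y Y (fun i => a (b i)) (fun i => i) /\
  lam_heq X X (fun i => b (a i)) (fun i => i).

Lemma liso_sym X Y a b : liso X Y a b -> liso Y X b a.
Proof. by case=> [h1 [h2 [h3 h4]]]; split; [|split; [|split]]. Qed.

Lemma nat_inv P P' A A' aP bP aA bA p p' :
  liso P P' aP bP -> liso A A' aA bA -> lam_ishom P A p -> lam_ishom P' A' p' ->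
  lam_heq P A' (fun i => aA (p i)) (fun i => p' (aP i)) ->
  lam_heq P' A (fun i => bA (p' i)) (fun i => p (bP i)).
Proof.
case=> haP [hbP [eP1 eP2]] [haA [hbA [eA1 eA2]]] hp hp' H.
apply: (@lq_trans _ _ _ (fun i => bA (p' (aP (bP i))))).
  apply: lq_sym; apply: (@lq_congL _ _ _ (fun i => bA (p' i)) _ _ _ eP1).
  exact: lh_comp hbA hp'.
apply: (@lq_trans _ _ _ (fun i => bA (aA (p (bP i))))).
  apply: (@lq_congL _ _ _ bA (fun i => p' (aP (bP i))) (fun i => aA (p (bP i))) hbA); apply: (@lq_congR _ _ (fun i => p' (aP i)) (fun i => aA (p i)) bP).
  exact: lq_sym.
exact: (@lq_congR _ _ (fun i => bA (aA i)) _ _ eA2).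
Qed.

Ltac step X := apply: (@lq_trans _ _ _ X).

Lemma iso_pb (P A B D P' A' B' D' : nat)
  (p1 p2 f g p1' p2' f' g' aP bP aA bA aB bB aD bD : Z -> Z) :
  liso P P' aP bP -> liso A A' aA bA -> liso B B' aB bB -> liso D D' aD bD ->
  lam_ishom P' A' p1' -> lam_ishom P' B' p2' -> lam_ishom A' D' f' -> lam_ishom B' D' g' ->
  lam_heq P A' (fun i => aA (p1 i)) (fun i => p1' (aP i)) ->
  lam_heq P B' (fun i => aB (p2 i)) (fun i => p2' (aP i)) ->
  lam_heq A D' (fun i => aD (f i)) (fun i => f' (aA i)) ->
  lam_heq B D' (fun i => aD (g i)) (fun i => g' (aB i)) ->
  @is_pullback Lam P A B D p1 p2 f g -> @is_pullback Lam P' A' B' D' p1' p2' f' g'.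
Proof.
move=> iP iA iB iD hp1' hp2' hf' hg' n1 n2 n3 n4 [hp1 [hp2 [hf [hg [hc hu]]]]].
have m1 := @nat_inv _ _ _ _ _ _ _ _ _ _ iP iA hp1 hp1' n1.
have m2 := @nat_inv _ _ _ _ _ _ _ _ _ _ iP iB hp2 hp2' n2.
have m3 := @nat_inv _ _ _ _ _ _ _ _ _ _ iA iD hf hf' n3.
have m4 := @nat_inv _ _ _ _ _ _ _ _ _ _ iB iD hg hg' n4.
move: iP iA iB iD => [haP [hbP [eP1 eP2]]] [haA [hbA [eA1 eA2]]]
  [haB [hbB [eB1 eB2]]] [haD [hbD [eD1 eD2]]].
rewrite /is_pullback /=.
do 4 (split; first done).
split.
  step (fun i => aD (bD (f' (p1' i)))).
    apply: lq_sym; exact: (@lq_congR _ _ (fun i => aD (bD i)) (fun i => i) (fun i => f' (p1' i)) eD1).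
  step (fun i => aD (f (bA (p1' i)))).
    apply: (@lq_congL _ _ _ aD _ _ haD).
    exact: (@lq_congR _ _ (fun i => bD (f' i)) (fun i => f (bA i)) p1' m3).
  step (fun i => aD (f (p1 (bP i)))).
    exact:  (@lq_congL _ _ _ (fun i => aD (f i)) (fun i => bA (p1' i)) (fun i => p1 (bP i)) (lh_comp haD hf) m1).
  step (fun i => aD (g (p2 (bP i)))).
    apply: (@lq_congL _ _ _ aD _ _ haD).
    exact: (@lq_congR _ _ (fun i => f (p1 i)) (fun i => g (p2 i)) bP hc).
  step (fun i => aD (g (bB (p2' i)))).
    apply: lq_sym; apply: (@lq_congL _ _ _ (fun i => aD (g i)) (fun i => bB (p2' i)) (fun i => p2 (bP i)) (lh_comp haD hg)).
    exact: m2.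
  step (fun i => aD (bD (g' (p2' i)))).
    apply: lq_sym; apply: (@lq_congL _ _ _ aD _ _ haD).
    exact: (@lq_congR _ _ (fun i => bD (g' i)) (fun i => g (bB i)) p2' m4).
  exact: (@lq_congR _ _ (fun i => aD (bD i)) (fun i => i) (fun i => g' (p2' i)) eD1).
move=> X x1 x2 hx1 hx2 hcx.
have hy : lam_heq X D (fun i => f (bA (x1 i))) (fun i => g (bB (x2 i))).
  step (fun i => bD (f' (x1 i))).
    apply: lq_sym; exact: (@lq_congR _ _ (fun i => bD (f' i)) (fun i => f (bA i)) x1 m3).
  step (fun i => bD (g' (x2 i))).
    exact: (@lq_congL _ _ _ bD _ _ hbD hcx).
  exact: (@lq_congR _ _ (fun i => bD (g' i)) (fun i => g (bB i)) x2 m4).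
have [[u [hu0 [e1 e2]]] uniq] := hu X _ _ (lh_comp hbA hx1) (lh_comp hbB hx2) hy.
split.
  exists (fun i => aP (u i)); split; first exact: lh_comp haP hu0.
  split.
    step (fun i => aA (p1 (u i))).
      apply: lq_sym; exact: (@lq_congR _ _ (fun i => aA (p1 i)) (fun i => p1' (aP i)) u n1).
    step (fun i => aA (bA (x1 i))).
      exact: (@lq_congL _ _ _ aA _ _ haA e1).
    exact: (@lq_congR _ _ (fun i => aA (bA i)) (fun i => i) x1 eA1).
  step (fun i => aB (p2 (u i))).
    apply: lq_sym; exact: (@lq_congR _ _ (fun i => aB (p2 i)) (fun i => p2' (aP i)) u n2).
  step (fun i => aB (bB (x2 i))).
    exact: (@lq_congL _ _ _ aB _ _ haB e2).
  exact: (@lq_congR _ _ (fun i => aB (bB i)) (fun i => i) x2 eB1).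
have back1 : forall w, lam_heq X A' (fun i => p1' (w i)) x1 ->
    lam_heq X A (fun i => p1 (bP (w i))) (fun i => bA (x1 i)).
  move=> w hw.
  step (fun i => bA (p1' (w i))).
    apply: lq_sym; exact: (@lq_congR _ _ (fun i => bA (p1' i)) (fun i => p1 (bP i)) w m1).
  exact: (@lq_congL _ _ _ bA _ _ hbA hw).
have back2 : forall w, lam_heq X B' (fun i => p2' (w i)) x2 ->
    lam_heq X B (fun i => p2 (bP (w i))) (fun i => bB (x2 i)).
  move=> w hw.
  step (fun i => bB (p2' (w i))).
    apply: lq_sym; exact: (@lq_congR _ _ (fun i => bB (p2' i)) (fun i => p2 (bP i)) w m2).
  exact: (@lq_congL _ _ _ bB _ _ hbB hw).
move=> u1 v1 hu1 hv1 eu1 eu2 ev1 ev2.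
have := uniq (fun i => bP (u1 i)) (fun i => bP (v1 i)) (lh_comp hbP hu1) (lh_comp hbP hv1)
  (back1 _ eu1) (back2 _ eu2) (back1 _ ev1) (back2 _ ev2) => huv.
step (fun i => aP (bP (u1 i))).
  apply: lq_sym; exact: (@lq_congR _ _ (fun i => aP (bP i)) (fun i => i) u1 eP1).
step (fun i => aP (bP (v1 i))).
  exact: (@lq_congL _ _ _ aP _ _ haP huv).
exact: (@lq_congR _ _ (fun i => aP (bP i)) (fun i => i) v1 eP1).
Qed.

Notation F := del_to_lam.

Lemma mod_bnd (i : Z) (m : nat) : 0 <= i mod NN m <= Z.of_nat m.
Proof. have := Z.mod_pos_bound i (NN m) ltac:(lia); lia. Qed.

Lemma Fh m n f : del_ishom m n f -> lam_ishom m n (F m n f).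
Proof.
case=> mf bf; rewrite /del_to_lam; split.
  move=> i j hij.
  have hi := mod_bnd i m; have hj := mod_bnd j m.
  have := bf _ hi; have := bf _ hj => bj bi.
  have hq : i / NN m <= j / NN m by apply: Z.div_le_mono; lia.
  case: (Z_lt_le_dec (i / NN m) (j / NN m)) => hq'.
    have : (i / NN m + 1) * NN n <= j / NN m * NN n.
      apply: Z.mul_le_mono_nonneg_r; lia.
    lia.
  have eq : i / NN m = j / NN m by lia.
  have hr : i mod NN m <= j mod NN m.
    have := Z.div_mod i (NN m) ltac:(lia); have := Z.div_mod j (NN m) ltac:(lia).
    rewrite eq; lia.
  rewrite eq; have := mf _ _ (proj1 hi) hr (proj2 hj); lia.
move=> i.
have -> : i + NN m = i + 1 * NN m by lia.
rewrite Z_mod_plus_full Z_div_plus_full; lia.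
Qed.

Lemma Fc m n p f g : del_ishom m n f -> forall i,
  F n p g (F m n f i) = F m p (fun j => g (f j)) i.
Proof.
case=> _ bf i; rewrite /del_to_lam.
have := bf _ (mod_bnd i m) => b.
rewrite modq ?divq //; lia.
Qed.

Lemma Fp m n f : del_ishom m n f -> forall i, F m n f i / NN n = i / NN m.
Proof.
case=> _ bf i; rewrite /del_to_lam.
have := bf _ (mod_bnd i m) => b.
rewrite divq //; lia.
Qed.

Lemma Fin m n f i : 0 <= i <= Z.of_nat m -> F m n f i = f i.
Proof.
move=> h; rewrite /del_to_lam Z.mod_small ?Z.div_small; lia.
Qed.

Lemma Fheq1 m n f f' : del_heq m n f f' -> lam_heq m n (F m n f) (F m n f').
Proof.
move=> H; exists 0 => i; rewrite /del_to_lam H; [lia| exact: mod_bnd].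
Qed.

Lemma Fheq2 m n f f' : del_ishom m n f -> del_ishom m n f' ->
  lam_heq m n (F m n f) (F m n f') -> del_heq m n f f'.
Proof.
move=> [_ bf] [_ bf'] [k H] i hi.
have := H i; rewrite !Fin // => e.
have := bf _ hi; have := bf' _ hi => b1 b2.
case: (Z.lt_trichotomy k 0) => [hk|[hk|hk]].
- have : k * NN n <= -1 * NN n by apply: Z.mul_le_mono_nonneg_r; lia.
  lia.
- subst k; lia.
- have : 1 * NN n <= k * NN n by apply: Z.mul_le_mono_nonneg_r; lia.
  lia.
Qed.

Lemma del_comp m n p g f : del_ishom n p g -> del_ishom m n f ->
  del_ishom m p (fun i => g (f i)).
Proof.
move=> [mg bg] [mf bf]; split.
  move=> i j h1 h2 h3; apply: mg; [exact: (proj1 (bf _ (conj h1 (Z.le_trans _ _ _ h2 h3))))|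
    exact: mf|exact: (proj2 (bf _ (conj (Z.le_trans _ _ _ h1 h2) h3)))].
by move=> i hi; apply: bg; apply: bf.
Qed.

Lemma norm_props m n h : lam_ishom m n h ->
  (exists C, forall i, h i / NN n = i / NN m + C) ->
  let q := fun i => h i - (h 0 / NN n) * NN n in
  lam_ishom m n q /\ del_ishom m n q /\ (forall i, F m n q i = q i) /\
  lam_heq m n q h /\ (forall i, q i / NN n = i / NN m).
Proof.
move=> [mh eh] [C HC] q.
have hc : h 0 / NN n = C by rewrite HC Z.div_0_l; lia.
have sl : forall i, q i / NN n = i / NN m.
  move=> i; rewrite /q.
  have -> : h i - h 0 / NN n * NN n = h i + (- (h 0 / NN n)) * NN n by lia.
  rewrite Z_div_plus_full; [rewrite HC; lia| lia].
have lq : lam_ishom m n q.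
  split; first by move=> i j hij; rewrite /q; have := mh _ _ hij; lia.
  by move=> i; rewrite /q eh; lia.
split; first exact: lq.
split.
  split; first by move=> i j h1 h2 h3; apply lq.1; lia.
  move=> i hi.
  have h0 : i / NN m = 0 by apply: Z.div_small; lia.
  have := sl i; rewrite h0 => e.
  have := Z.mod_pos_bound (q i) (NN n) ltac:(lia).
  have := Z.div_mod (q i) (NN n) ltac:(lia).
  rewrite e; lia.
split.
  move=> i; rewrite /del_to_lam -(eqv_mul lq.2).
  by have := Z.div_mod i (NN m) ltac:(lia) => e; congr q; lia.
split; last exact: sl.
by exists (- (h 0 / NN n)) => i; rewrite /q; lia.
Qed.

Lemma lift x P u : lam_ishom x P u ->
  (exists C, forall i, u i / NN P = i / NN x + C) ->
  exists u', del_ishom x P u' /\ lam_heq x P (F x P u') u.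
Proof.
move=> hu hC; have [_ [hd [hF [he _]]]] := norm_props hu hC.
eexists; split; first exact: hd.
apply: lq_trans he; exact: lq_ext hF.
Qed.

Lemma rot x A x1 : lam_ishom x A x1 ->
  exists r K, forall i, x1 (i + r) / NN A = i / NN x + K.
Proof.
move=> [m1 e1]; apply: (@rot_gen (NN x) (fun j => x1 j / NN A)); first lia.
  by move=> i j h; apply: Z.div_le_mono; [lia| exact: m1].
move=> i; rewrite e1.
have -> : x1 i + NN A = x1 i + 1 * NN A by lia.
rewrite Z_div_plus_full; lia.
Qed.

Lemma comp1 m n p (a b : Z -> Z) : del_ishom m n b ->
  lam_heq m p (fun i => F n p a (F m n b i)) (F m p (fun i => a (b i))).
Proof. move=> hb; apply: lq_ext => i; exact: Fc. Qed.

Lemma B2 (P A B D : nat) (p1 p2 f g : Z -> Z) :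
  del_ishom P A p1 -> del_ishom P B p2 -> del_ishom A D f -> del_ishom B D g ->
  (@is_pullback Del P A B D p1 p2 f g <->
   @is_pullback Lam P A B D (F P A p1) (F P B p2) (F A D f) (F B D g)).
Proof.
move=> h1 h2 hf hg.
split.
- rewrite /is_pullback /=; move=> [_ [_ [_ [_ [hc hu]]]]].
  do 4 (split; first exact: Fh).
  split.
    step (F P D (fun i => f (p1 i))); first exact: comp1.
    step (F P D (fun i => g (p2 i))); first exact: Fheq1.
    apply: lq_sym; exact: comp1.
  move=> X x1 x2 hx1 hx2 hcx.
  have [r [K Hr]] := rot hx1.
  have [k Hk] := hcx.
  have rel : forall i, x2 i / NN B = x1 i / NN A - k.
    move=> i; rewrite -(Fp hf (x1 i)) -(Fp hg (x2 i)).
    have E := Hk i; cbv beta in E; rewrite E Z_div_plus_full; lia.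
  have hr1 : lam_ishom X A (fun i => x1 (i + r)) := lh_comp hx1 (lh_shift X r).
  have hr2 : lam_ishom X B (fun i => x2 (i + r)) := lh_comp hx2 (lh_shift X r).
  have [y1 [hy1 ey1]] := lift hr1 (ex_intro _ K Hr).
  have sl2 : exists C, forall i, x2 (i + r) / NN B = i / NN X + C.
    by exists (K - k) => i; rewrite rel Hr; lia.
  have [y2 [hy2 ey2]] := lift hr2 sl2.
  have hyc : del_heq X D (fun i => f (y1 i)) (fun i => g (y2 i)).
    apply: Fheq2; [exact: del_comp hf hy1| exact: del_comp hg hy2|].
    step (fun i => F A D f (F X A y1 i)); first by apply: lq_sym; exact: comp1.
    step (fun i => F A D f (x1 (i + r))); first exact: (lq_congL (Fh hf) ey1).
    step (fun i => F B D g (x2 (i + r))).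
      exact: (@lq_congR _ _ (fun i => F A D f (x1 i)) (fun i => F B D g (x2 i)) (fun i => i + r) hcx).
    step (fun i => F B D g (F X B y2 i)); first exact: (lq_congL (Fh hg) (lq_sym ey2)).
    exact: comp1.
  have [[u' [hu' [e1 e2]]] uniq] := hu X y1 y2 hy1 hy2 hyc.
  split.
    exists (fun i => F X P u' (i + - r)); split; first exact: lh_comp (Fh hu') (lh_shift X (- r)).
    split.
      step (fun i => F X A (fun j => p1 (u' j)) (i + - r)); first by apply: lq_ext => i; exact: Fc.
      step (fun i => F X A y1 (i + - r)); first exact: (@lq_congR _ _ _ _ (fun i => i + - r) (Fheq1 e1)).
      step (fun i => x1 (i + - r + r)); first exact: (@lq_congR _ _ _ (fun i => x1 (i + r)) (fun i => i + - r) ey1).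
      apply: lq_ext => i; congr x1; lia.
    step (fun i => F X B (fun j => p2 (u' j)) (i + - r)); first by apply: lq_ext => i; exact: Fc.
    step (fun i => F X B y2 (i + - r)); first exact: (@lq_congR _ _ _ _ (fun i => i + - r) (Fheq1 e2)).
    step (fun i => x2 (i + - r + r)); first exact: (@lq_congR _ _ _ (fun i => x2 (i + r)) (fun i => i + - r) ey2).
    apply: lq_ext => i; congr x2; lia.
  have L : forall w, lam_ishom X P w -> lam_heq X A (fun i => F P A p1 (w i)) x1 ->
      lam_heq X B (fun i => F P B p2 (w i)) x2 ->
      exists w', del_ishom X P w' /\ del_heq X A (fun i => p1 (w' i)) y1 /\
        del_heq X B (fun i => p2 (w' i)) y2 /\ lam_heq X P (F X P w') (fun i => w (i + r)).
    move=> w hw ew1 ew2.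
    have hwr := lh_comp hw (lh_shift X r).
    have [k1 Hk1] := ew1.
    have slw : exists C, forall i, w (i + r) / NN P = i / NN X + C.
      exists (K + k1) => i; rewrite -(Fp h1 (w (i + r))).
      have E := Hk1 (i + r); cbv beta in E; rewrite E Z_div_plus_full; [rewrite Hr; lia| lia].
    have [w' [hw' ew']] := lift hwr slw.
    exists w'; split; first done.
    split.
      apply: Fheq2; [exact: del_comp h1 hw'| exact: hy1|].
      step (fun i => F P A p1 (F X P w' i)); first by apply: lq_sym; exact: comp1.
      step (fun i => F P A p1 (w (i + r))); first exact: (lq_congL (Fh h1) ew').
      step (fun i => x1 (i + r)); first exact: (@lq_congR _ _ (fun i => F P A p1 (w i)) x1 (fun i => i + r) ew1).
      exact: lq_sym ey1.
    split; last done.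
    apply: Fheq2; [exact: del_comp h2 hw'| exact: hy2|].
    step (fun i => F P B p2 (F X P w' i)); first by apply: lq_sym; exact: comp1.
    step (fun i => F P B p2 (w (i + r))); first exact: (lq_congL (Fh h2) ew').
    step (fun i => x2 (i + r)); first exact: (@lq_congR _ _ (fun i => F P B p2 (w i)) x2 (fun i => i + r) ew2).
    exact: lq_sym ey2.
  move=> u v hu0 hv0 eu1 eu2 ev1 ev2.
  have [u'' [hu'' [fu1 [fu2 Eu]]]] := L u hu0 eu1 eu2.
  have [v'' [hv'' [fv1 [fv2 Ev]]]] := L v hv0 ev1 ev2.
  have huv := uniq u'' v'' hu'' hv'' fu1 fu2 fv1 fv2.
  step (fun i => u (i + - r + r)); first by apply: lq_ext => i; congr u; lia.
  step (fun i => F X P u'' (i + - r)); first exact: (@lq_congR _ _ _ _ (fun i => i + - r) (lq_sym Eu)).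
  step (fun i => F X P v'' (i + - r)); first exact: (@lq_congR _ _ _ _ (fun i => i + - r) (Fheq1 huv)).
  step (fun i => v (i + - r + r)); first exact: (@lq_congR _ _ _ (fun i => v (i + r)) (fun i => i + - r) Ev).
  apply: lq_ext => i; congr v; lia.
- rewrite /is_pullback /=; move=> [_ [_ [_ [_ [hc hu]]]]].
  do 4 (split; first done).
  split.
    apply: Fheq2; [exact: del_comp hf h1|exact: del_comp hg h2|].
    step (fun i => F A D f (F P A p1 i)); first by apply: lq_sym; exact: comp1.
    step (fun i => F B D g (F P B p2 i)); first exact: hc.
    exact: comp1.
  move=> X x1 x2 hx1 hx2 hcx.
  have hcl : lam_heq X D (fun i => F A D f (F X A x1 i)) (fun i => F B D g (F X B x2 i)).
    step (F X D (fun i => f (x1 i))); first exact: comp1.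
    step (F X D (fun i => g (x2 i))); first exact: Fheq1.
    apply: lq_sym; exact: comp1.
  have [[u [hu0 [e1 e2]]] uniq] := hu X _ _ (Fh hx1) (Fh hx2) hcl.
  split.
    have [k1 Hk1] := e1.
    have sl : exists C, forall i, u i / NN P = i / NN X + C.
      exists k1 => i; rewrite -(Fp h1 (u i)).
      have E := Hk1 i; cbv beta in E; rewrite E Z_div_plus_full ?(Fp hx1); lia.
    have [u' [hu' eu']] := lift hu0 sl.
    exists u'; split; first done.
    split.
      apply: Fheq2; [exact: del_comp h1 hu'|exact: hx1|].
      step (fun i => F P A p1 (F X P u' i)); first by apply: lq_sym; exact: comp1.
      step (fun i => F P A p1 (u i)); first exact: (lq_congL (Fh h1) eu').
      exact: e1.
    apply: Fheq2; [exact: del_comp h2 hu'|exact: hx2|].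
    step (fun i => F P B p2 (F X P u' i)); first by apply: lq_sym; exact: comp1.
    step (fun i => F P B p2 (u i)); first exact: (lq_congL (Fh h2) eu').
    exact: e2.
  move=> w1 w2 hw1 hw2 eu1 eu2 ev1 ev2.
  apply: Fheq2 => //.
  apply: uniq; try exact: Fh.
  - step (F X A (fun i => p1 (w1 i))); first exact: comp1. exact: Fheq1.
  - step (F X B (fun i => p2 (w1 i))); first exact: comp1. exact: Fheq1.
  - step (F X A (fun i => p1 (w2 i))); first exact: comp1. exact: Fheq1.
  - step (F X B (fun i => p2 (w2 i))); first exact: comp1. exact: Fheq1.
Qed.

Lemma sub_facts (S : finType) (T : {set S}) s s' :
  [/\ (s |: T) \subset (s |: (s' |: T)), (s' |: T) \subset (s |: (s' |: T)),
      T \subset (s |: T) & T \subset (s' |: T)].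
Proof. split; rewrite ?subsetUr //; apply: setUS; exact: subsetUr. Qed.

Lemma transfer (S : finType) (Q : cube Lam S) (Q' : cube Del S) :
  is_cube Q -> is_cube Q' -> nat_iso (lam_image Q') Q ->
  (strongly_cartesian Q <-> strongly_cartesian Q').
Proof.
move=> [hQ _] [hQ' _] [a [b Hab]].
have iso : forall T, liso (cobj Q' T) (cobj Q T) (a T) (b T).
  move=> T; have [h1 [h2 [h3 [h4 _]]]] := Hab T.
  by split; [exact h1|split; [exact h2| split; [exact h3| exact h4]]].
have nat : forall T T' : {set S}, T \subset T' -> lam_heq (cobj Q' T') (cobj Q T)
   (fun i => a T (F (cobj Q' T') (cobj Q' T) (cmap Q' T T') i))
   (fun i => cmap Q T T' (a T' i)).
  move=> T T' hT; have [_ [_ [_ [_ h5]]]] := Hab T; exact: (h5 T' hT).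
split=> H T s s' hss hs hs'; have [s1 s2 s3 s4] := sub_facts T s s'.
- apply/(B2 (hQ' _ _ s1) (hQ' _ _ s2) (hQ' _ _ s3) (hQ' _ _ s4)).
  apply: (iso_pb (liso_sym (iso _)) (liso_sym (iso _)) (liso_sym (iso _)) (liso_sym (iso _))).
  + exact: Fh (hQ' _ _ s1).
  + exact: Fh (hQ' _ _ s2).
  + exact: Fh (hQ' _ _ s3).
  + exact: Fh (hQ' _ _ s4).
  + exact: (nat_inv (iso _) (iso _) (Fh (hQ' _ _ s1)) (hQ _ _ s1) (nat _ _ s1)).
  + exact: (nat_inv (iso _) (iso _) (Fh (hQ' _ _ s2)) (hQ _ _ s2) (nat _ _ s2)).
  + exact: (nat_inv (iso _) (iso _) (Fh (hQ' _ _ s3)) (hQ _ _ s3) (nat _ _ s3)).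
  + exact: (nat_inv (iso _) (iso _) (Fh (hQ' _ _ s4)) (hQ _ _ s4) (nat _ _ s4)).
  + exact: H.
- apply: (iso_pb (iso _) (iso _) (iso _) (iso _)).
  + exact: (hQ _ _ s1).
  + exact: (hQ _ _ s2).
  + exact: (hQ _ _ s3).
  + exact: (hQ _ _ s4).
  + exact: (nat _ _ s1).
  + exact: (nat _ _ s2).
  + exact: (nat _ _ s3).
  + exact: (nat _ _ s4).
  + apply/(B2 (hQ' _ _ s1) (hQ' _ _ s2) (hQ' _ _ s3) (hQ' _ _ s4)); exact: H.
Qed.

Lemma heq_bnd n a b k : 0 <= a <= Z.of_nat n -> 0 <= b <= Z.of_nat n ->
  a = b + k * NN n -> a = b.
Proof.
move=> b1 b2 e.
case: (Z.lt_trichotomy k 0) => [hk|[hk|hk]].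
- have : k * NN n <= -1 * NN n by apply: Z.mul_le_mono_nonneg_r; lia.
  lia.
- subst k; lia.
- have : 1 * NN n <= k * NN n by apply: Z.mul_le_mono_nonneg_r; lia.
  lia.
Qed.

Lemma exists_lift (S : finType) (Q : cube Lam S) : is_cube Q ->
  exists Q' : cube Del S, is_cube Q' /\ nat_iso (lam_image Q') Q.
Proof.
move=> [Hh [Hid Hcomp]].
have HR : forall T : {set S}, exists r K, forall i,
    cmap Q set0 T (i + r) / NN (cobj Q set0) = i / NN (cobj Q T) + K.
  move=> T; exact: rot (Hh _ _ (sub0set T)).
pose r T := proj1_sig (constructive_indefinite_description _ (HR T)).
have Hr : forall T, exists K, forall i,
    cmap Q set0 T (i + r T) / NN (cobj Q set0) = i / NN (cobj Q T) + K.
  move=> T; exact: proj2_sig (constructive_indefinite_description _ (HR T)).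
pose h T T' := fun i => cmap Q T T' (i + r T') + - r T.
have hh : forall T T' : {set S}, T \subset T' -> lam_ishom (cobj Q T') (cobj Q T) (h T T').
  move=> T T' hT; exact: lh_comp (lh_shift _ _) (lh_comp (Hh _ _ hT) (lh_shift _ _)).
have hsl : forall T T' : {set S}, T \subset T' ->
    exists C, forall i, h T T' i / NN (cobj Q T) = i / NN (cobj Q T') + C.
  move=> T T' hT.
  have [KT HT] := Hr T; have [KT' HT'] := Hr T'.
  have [k Hk] := Hcomp set0 T T' (sub0set T) hT.
  exists (KT' - k - KT) => i.
  have e1 := HT (h T T' i).
  have E0 : h T T' i + r T = cmap Q T T' (i + r T') by rewrite /h; lia.
  rewrite E0 in e1.
  have e2 := HT' i.
  have E : cmap Q set0 T' (i + r T') =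
     cmap Q set0 T (cmap Q T T' (i + r T')) + k * NN (cobj Q set0) := Hk (i + r T').
  rewrite E Z_div_plus_full in e2; lia.
pose q T T' := fun i => h T T' i - (h T T' 0 / NN (cobj Q T)) * NN (cobj Q T).
exists (@Cube Del S (cobj Q) q).
split.
  split.
    move=> T T' hT; have [_ [hd _]] := norm_props (hh _ _ hT) (hsl _ _ hT); exact: hd.
  split.
    move=> T i hi; change (q T T i = i).
    have [k Hk] := Hid T.
    have E : forall j, cmap Q T T j = j + k * NN (cobj Q T) := Hk.
    have Eh : forall j, h T T j = j + k * NN (cobj Q T) by move=> j; rewrite /h E; lia.
    rewrite /q !Eh.
    have -> : (0 + k * NN (cobj Q T)) / NN (cobj Q T) = k by rewrite Z.add_0_l Z.div_mul; lia.
    lia.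
  move=> T1 T2 T3 h12 h23 i hi; change (q T1 T3 i = q T1 T2 (q T2 T3 i)).
  have h13 := subset_trans h12 h23.
  have [l13 [d13 [_ [e13 _]]]] := norm_props (hh _ _ h13) (hsl _ _ h13).
  have [l12 [d12 [_ [e12 _]]]] := norm_props (hh _ _ h12) (hsl _ _ h12).
  have [l23 [d23 [_ [e23 _]]]] := norm_props (hh _ _ h23) (hsl _ _ h23).
  have b13 := d13.2 i hi.
  have b23 := d23.2 i hi.
  have b12 := d12.2 _ b23.
  have : lam_heq (cobj Q T3) (cobj Q T1) (q T1 T3) (fun i => q T1 T2 (q T2 T3 i)).
    step (h T1 T3); first exact: e13.
    step (fun i => h T1 T2 (h T2 T3 i)).
      have [k Hk] := Hcomp T1 T2 T3 h12 h23.
      exists k => j.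
      have E : cmap Q T1 T3 (j + r T3) = cmap Q T1 T2 (cmap Q T2 T3 (j + r T3))
         + k * NN (cobj Q T1) := Hk (j + r T3).
      rewrite /h E.
      have -> : cmap Q T2 T3 (j + r T3) + - r T2 + r T2 = cmap Q T2 T3 (j + r T3) by lia.
      lia.
    step (fun i => q T1 T2 (h T2 T3 i)).
      exact: (@lq_congR _ _ _ _ (h T2 T3) (lq_sym e12)).
    exact: (lq_congL l12 (lq_sym e23)).
  case=> k Hk; exact: heq_bnd b13 b12 (Hk i).
exists (fun T => fun i => i + r T), (fun T => fun i => i + - r T).
move=> T.
split; first exact: lh_shift.
split; first exact: lh_shift.
split; first by apply: lq_ext => i /=; lia.
split; first by apply: lq_ext => i /=; lia.
move=> T' hT.
have [_ [_ [Fq [eq _]]]] := norm_props (hh _ _ hT) (hsl _ _ hT).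
step (fun i => q T T' i + r T).
  by apply: lq_ext => i; exact: (f_equal (fun x => x + r T) (Fq i)).
step (fun i => h T T' i + r T).
  exact: (@lq_congL _ _ _ (fun j => j + r T) _ _ (lh_shift _ _) eq).
apply: lq_ext => i; change (cmap Q T T' (i + r T') + - r T + r T = cmap Q T T' (i + r T')); lia.
Qed.

Theorem lemma4p2p7 (S : finType) (Q : cube Lam S) :
  is_cube Q ->
  (strongly_cartesian Q <->
     exists Q' : cube Del S,
       is_cube Q' /\ nat_iso (lam_image Q') Q /\ strongly_cartesian Q') /\
  (strongly_cartesian Q <->
     forall Q' : cube Del S,
       is_cube Q' -> nat_iso (lam_image Q') Q -> strongly_cartesian Q').
Proof.
move=> HQ; have [Q0 [HQ0 Hi0]] := exists_lift HQ.
split; split.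
- move=> Hsc; exists Q0; split; first done; split; first done.
  exact: (proj1 (transfer HQ HQ0 Hi0) Hsc).
- case=> Q' [HQ' [Hi Hsc']]; exact: (proj2 (transfer HQ HQ' Hi) Hsc').
- move=> Hsc Q' HQ' Hi; exact: (proj1 (transfer HQ HQ' Hi) Hsc).
- move=> H; exact: (proj2 (transfer HQ HQ0 Hi0) (H Q0 HQ0 Hi0)).
Qed.
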